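(* Let $\Gamma$ be a metrized graph, and for each edge $e_i\in E(\Gamma)$ let $p_i,q_i$ be its end points. For any $p \in V(\Gamma)$, $$\sum_{e_i \in E(\Gamma)}\frac{L_i(R_{a_i,p}-R_{b_i,p})^2}{(L_i+R_i)^2} =\sum_{e_i \in E(\Gamma)}\frac{L_i}{L_i + R_i}\big(r(p_i,p)+r(q_i,p)\big) - \sum_{q \in V(\Gamma)}(\mathrm{val}(q)-2)\,r(p,q) = 2\sum_{q \in V(\Gamma)}r(p,q) -\sum_{e_i \in E(\Gamma)}\frac{R_i}{L_i + R_i} \big(r(p_i,p)+r(q_i,p)\big).$$
   Context: A metrized graph $\Gamma$ is a finite connected graph (multiple edges and self-loops allowed) each of whose edges is identified with a closed segment of positive length, with a finite nonempty vertex set $V(\Gamma)$ containing every point of valence $\neq2$; $\mathrm{val}(q)$ is the valence of $q$ (number of directions emanating from $q$); $L_i$ is the length of $e_i$; $r$ is the effective resistance (edges as resistors of resistance equal to length). For an edge $e_i$: if $\Gamma-e_i$ (interior deleted) is connected, $R_i$ is the effective resistance between $p_i,q_i$ in $\Gamma-e_i$, $R_{a_i,p}=\hat j_{p_i}(p,q_i)$, $R_{b_i,p}=\hat j_{q_i}(p,p_i)$ with $\hat j_z(x,y)$ the voltage function of $\Gamma-e_i$ (potential at $x$ when unit current enters at $y$ and exits at $z$, potential $0$ at $z$); if $e_i$ is a bridge, $R_{a_i,p}=0,R_{b_i,p}=R_i$ for $p$ in the component of $\Gamma-e_i$ containing $p_i$ and $R_{a_i,p}=R_i,R_{b_i,p}=0$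 otherwise, with every expression in $R_i$ interpreted as its limit as $R_i\to\infty$; for a self-loop $R_i=0$. *)

(* Defs.v *)
From HB Require Import structures.
From mathcomp Require Import all_boot all_order all_algebra.
From mathcomp Require Import all_classical all_reals topology normedtype.
From Stdlib Require Import ClassicalEpsilon.
Set Implicit Arguments. Unset Strict Implicit. Unset Printing Implicit Defensive.
Import Order.TTheory GRing.Theory Num.Theory.
Import numFieldNormedType.Exports.
Local Open Scope classical_set_scope.
Local Open Scope ring_scope.

(* A metrized graph is given by a finite vertex type V (the vertex set V(Gamma)),
   a finite edge type E, endpoints pe e, qe e : V of each edge e (multiple edges
   and self-loops allowed), and edge lengths L e (> 0). A subgraph obtained by
   deleting edges is described by a predicate [keep : pred E] of kept edges. *)
Section MetrizedGraph.
Variables (R : realType) (V E : finType) (pe qe : E -> V) (L : E -> R).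

Definition adj (keep : pred E) : rel V :=
  fun x y => [exists e, keep e &&
    (((pe e == x) && (qe e == y)) || ((pe e == y) && (qe e == x)))].

Definition gconnected (keep : pred E) : Prop :=
  forall x y : V, connect (adj keep) x y.

(* valence: number of directions emanating from q (a self-loop counts twice) *)
Definition valence (q : V) : nat :=
  #|[set e | pe e == q]| + #|[set e | qe e == q]|.

(* f is the voltage function j_z(., y) of the subgraph keep: unit current enters
   at y, exits at z (Kirchhoff's current law at every vertex, edges of resistance
   L e), and the potential at z is 0. *)
Definition is_voltage (keep : pred E) (z y : V) (f : V -> R) : Prop :=
  f z = 0 /\
  forall v : V,
    \sum_(e | keep e && (pe e == v)) (f v - f (qe e)) / L e
  + \sum_(e | keep e && (qe e == v)) (f v - f (pe e)) / L e
  = (v == y)%:R - (v == z)%:R.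

(* j_z(x, y) in the subgraph keep (a chosen voltage function; unique when the
   subgraph is connected) *)
Definition jfun (keep : pred E) (z x y : V) : R :=
  epsilon (inhabits (fun _ : V => 0 : R)) (is_voltage keep z y) x.

Definition reff (x y : V) : R := jfun predT y x x.

Definition del (i : E) : pred E := fun e => e != i.

Definition nonbridge (i : E) : Prop := gconnected (del i).

(* R_i: effective resistance between p_i and q_i in Gamma - e_i (non-bridge case) *)
Definition Rres (i : E) : R := jfun (del i) (qe i) (pe i) (pe i).

(* R_{a_i,p} = jhat_{p_i}(p, q_i), R_{b_i,p} = jhat_{q_i}(p, p_i) (non-bridge case) *)
Definition Ra (i : E) (p : V) : R := jfun (del i) (pe i) p (qe i).
Definition Rb (i : E) (p : V) : R := jfun (del i) (qe i) p (pe i).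

(* If e_i is not a
   bridge it is evaluated at the actual values; if e_i is a bridge,
   R_{a_i,p} = 0, R_{b_i,p} = R_i when p lies in the component of Gamma - e_i
   containing p_i and R_{a_i,p} = R_i, R_{b_i,p} = 0 otherwise, and the
   expression is interpreted as its limit as R_i -> +oo. *)
Definition edge_val (F : R -> R -> R -> R) (i : E) (p : V) : R :=
  if `[< nonbridge i >] then F (Rres i) (Ra i p) (Rb i p)
  else if connect (adj (del i)) (pe i) p
       then lim (F t 0 t @[t --> +oo])
       else lim (F t t 0 @[t --> +oo]).

End MetrizedGraph.

(* Main.v *)
Require Import Defs.
From HB Require Import structures.
From mathcomp Require Import all_boot all_order all_algebra.
From mathcomp Require Import all_classical all_reals topology normedtype.
From mathcomp Require Import ring lra.
From Stdlib Require Import ClassicalEpsilon.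
Import Order.TTheory GRing.Theory Num.Theory.
Import numFieldNormedType.Exports.
Local Open Scope classical_set_scope.
Local Open Scope ring_scope.

Lemma lim1 (R : realType) (L : R) : 0 < L -> L / (L + t) @[t --> +oo] --> (0:R).
Proof.
move=> L0; apply/cvgrPdist_lt => eps eps0.
exists (L / eps); split; first by rewrite realE ltW ?orTb // divr_gt0.
move=> t Ht; rewrite sub0r normrN.
have t0 : 0 < t by apply: lt_trans Ht; rewrite divr_gt0.
rewrite ger0_norm ?divr_ge0 ?ltW ?addr_gt0 //.
rewrite ltr_pdivrMr ?addr_gt0 //.
rewrite ltr_pdivrMr // in Ht. nra.
Qed.

Lemma lim2 (R : realType) (L : R) : 0 < L -> t / (L + t) @[t --> +oo] --> (1:R).
Proof.
move=> L0; apply/cvgrPdist_lt => eps eps0.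
exists (L / eps); split; first by rewrite realE ltW ?orTb // divr_gt0.
move=> t Ht.
have t0 : 0 < t by apply: lt_trans Ht; rewrite divr_gt0.
have -> : 1 - t / (L + t) = L / (L + t).
  by field; rewrite gt_eqF // addr_gt0.
rewrite ger0_norm ?divr_ge0 ?ltW ?addr_gt0 //.
rewrite ltr_pdivrMr ?addr_gt0 //.
rewrite ltr_pdivrMr // in Ht. nra.
Qed.

Lemma lim3 (R : realType) (L : R) : 0 < L ->
  lim (L * (t - 0) ^+ 2 / (L + t) ^+ 2 @[t --> +oo]) = L /\
  lim (L * (0 - t) ^+ 2 / (L + t) ^+ 2 @[t --> +oo]) = L /\
  lim (L / (L + t) @[t --> +oo]) = 0 /\
  lim (t / (L + t) @[t --> +oo]) = 1.
Proof.
move=> L0.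
have h2 := (@lim2 R L L0).
have h3 : ((fun=> L) \* (fun t => t / (L + t)) \* (fun t => t / (L + t))) @ +oo --> L * 1 * 1.
  apply: cvgM => //; apply: cvgM => //; exact: cvg_cst.
rewrite mulr1 mulr1 in h3.
split; [|split; [|split]].
- apply: cvg_lim; first exact: norm_hausdorff.
  suff -> : (fun t => L * (t - 0) ^+ 2 / (L + t) ^+ 2) = ((fun=> L) \* (fun t => t / (L + t)) \* (fun t => t / (L + t))) by [].
  by apply/funext => t /=; rewrite subr0 -exprVn; ring.
- apply: cvg_lim; first exact: norm_hausdorff.
  suff -> : (fun t => L * (0 - t) ^+ 2 / (L + t) ^+ 2) = ((fun=> L) \* (fun t => t / (L + t)) \* (fun t => t / (L + t))) by [].
  by apply/funext => t /=; rewrite sub0r sqrrN -exprVn; ring.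
- apply: cvg_lim; first exact: norm_hausdorff. exact: (@lim1 R L L0).
- apply: cvg_lim; first exact: norm_hausdorff. exact: (@lim2 R L L0).
Qed.

Section Graph.
Variables (R : realType) (V E : finType) (pe qe : E -> V) (L : E -> R).
Hypothesis L_pos : forall e, 0 < L e.

Lemma Lneq0 e : L e != 0.
Proof. by rewrite gt_eqF. Qed.

Definition Kop (keep : pred E) (f : V -> R) (v : V) : R :=
    \sum_(e | keep e && (pe e == v)) (f v - f (qe e)) / L e
  + \sum_(e | keep e && (qe e == v)) (f v - f (pe e)) / L e.

Lemma is_voltageE keep z y f :
  is_voltage pe qe L keep z y f <->
  f z = 0 /\ forall v, Kop keep f v = (v == y)%:R - (v == z)%:R.
Proof. by []. Qed.

Lemma sum_exch (phi : E -> V) (P : pred E) (F : E -> V -> R) :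
  \sum_v \sum_(e | P e && (phi e == v)) F e v = \sum_(e | P e) F e (phi e).
Proof.
under eq_bigr do rewrite big_mkcond.
rewrite exchange_big [RHS]big_mkcond; apply: eq_bigr => e _.
rewrite (bigD1 (phi e)) //= eqxx andbT big1 ?addr0 //.
by move=> v /negbTE Hv; rewrite eq_sym Hv andbF.
Qed.

Lemma sum_Kop_dep keep (g : V -> R) (H : V -> V -> R) :
  \sum_v g v * Kop keep (fun x => H x v) v =
  \sum_(e | keep e) (g (pe e) * (H (pe e) (pe e) - H (qe e) (pe e))
                   + g (qe e) * (H (qe e) (qe e) - H (pe e) (qe e))) / L e.
Proof.
rewrite /Kop.
under eq_bigr do rewrite mulrDr !mulr_sumr.
rewrite big_split /=.
rewrite (sum_exch pe keep (fun e v => g v * ((H v v - H (qe e) v) / L e))).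
rewrite (sum_exch qe keep (fun e v => g v * ((H v v - H (pe e) v) / L e))).
rewrite -big_split /=; apply: eq_bigr => e _; ring.
Qed.

Lemma GI keep (f g : V -> R) :
  \sum_v g v * Kop keep f v =
  \sum_(e | keep e) (f (pe e) - f (qe e)) * (g (pe e) - g (qe e)) / L e.
Proof.
rewrite (sum_Kop_dep keep g (fun x _ => f x)); apply: eq_bigr => e _; ring.
Qed.

Lemma Kop_sum0 keep f : \sum_v Kop keep f v = 0.
Proof.
transitivity (\sum_v (fun=> 1) v * Kop keep f v).
  by apply: eq_bigr => v _; rewrite mul1r.
by rewrite GI big1 // => e _; rewrite subrr mulr0 mul0r.
Qed.

Lemma adj_sym keep : symmetric (adj pe qe keep).
Proof.
move=> x y; apply/existsP/existsP => -[e He]; exists e; move: He;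
by case: (keep e) => //=; rewrite orbC.
Qed.

Lemma harm0 keep (h : V -> R) z :
  gconnected pe qe keep -> (forall v, Kop keep h v = 0) -> h z = 0 ->
  forall x, h x = 0.
Proof.
move=> Hc HK Hz.
have Hsum := GI keep h h.
have H0 : \sum_v h v * Kop keep h v = 0.
  by rewrite big1 // => v _; rewrite HK mulr0.
rewrite H0 in Hsum.
have Hedge : forall e, keep e -> h (pe e) = h (qe e).
  move=> e ke.
  have := psumr_eq0P _ (esym Hsum) ke.
  have Hge : forall i, keep i -> 0 <= (h (pe i) - h (qe i)) * (h (pe i) - h (qe i)) / L i.
    move=> i _; apply: divr_ge0; first by rewrite -expr2 sqr_ge0.
    exact: ltW.
  move=> /(_ Hge) /eqP; rewrite mulf_eq0 invr_eq0 (negbTE (Lneq0 e)) orbF.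
  by rewrite mulf_eq0 orbb subr_eq0 => /eqP.
have Hadj : forall x y, adj pe qe keep x y -> h x = h y.
  move=> x y /existsP [e /andP [ke]] /orP [] /andP [/eqP <- /eqP <-];
  by rewrite Hedge.
have Hconn : forall x y, connect (adj pe qe keep) x y -> h x = h y.
  move=> x y /connectP [s Hp ->]; elim: s x Hp => [|w s IH] x //= /andP [Hxw Hp].
  by rewrite (Hadj _ _ Hxw) (IH _ Hp).
by move=> x; rewrite (Hconn _ _ (Hc x z)).
Qed.

Lemma Kop_lin keep (h f g : V -> R) a b c w :
  (forall v, h v = a * f v + b * g v + c) ->
  Kop keep h w = a * Kop keep f w + b * Kop keep g w.
Proof.
move=> Hh; rewrite /Kop.
have E1 : forall u v e, (h v - h u) / L e = a * ((f v - f u) / L e) + b * ((g v - g u) / L e).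
  by move=> u v e; rewrite !Hh; ring.
under eq_bigr do rewrite E1.
under [X in _ + X]eq_bigr do rewrite E1.
rewrite !big_split -!mulr_sumr /=; ring.
Qed.

Lemma Kop_ext keep (h f : V -> R) w : (forall v, h v = f v) -> Kop keep h w = Kop keep f w.
Proof.
move=> Hh; rewrite (Kop_lin keep h f f 1 0 0 w) ?mul1r ?mul0r ?addr0 // => v.
by rewrite Hh mul1r mul0r !addr0.
Qed.

Lemma Kop_sum keep (I : finType) (c : I -> R) (F : I -> V -> R) w :
  Kop keep (fun v => \sum_i c i * F i v) w = \sum_i c i * Kop keep (F i) w.
Proof.
rewrite /Kop.
have E1 : forall u v e, ((\sum_i c i * F i v) - (\sum_i c i * F i u)) / L e
   = \sum_i c i * ((F i v - F i u) / L e).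
  by move=> u v e; rewrite -sumrB mulr_suml; apply: eq_bigr => i _; ring.
under eq_bigr do rewrite E1.
under [X in _ + X]eq_bigr do rewrite E1.
rewrite exchange_big [X in _ + X]exchange_big /= -big_split /=.
by apply: eq_bigr => i _; rewrite mulrDr !mulr_sumr.
Qed.


Lemma sum_delta (g : V -> R) y : \sum_v g v * (v == y)%:R = g y.
Proof.
rewrite (bigD1 y) //= eqxx mulr1 big1 ?addr0 // => v /negbTE ->; by rewrite mulr0.
Qed.

Lemma sum_delta2 (g : V -> R) y z :
  \sum_v g v * ((v == y)%:R - (v == z)%:R) = g y - g z.
Proof.
under eq_bigr do rewrite mulrBr.
by rewrite sumrB !sum_delta.
Qed.

Lemma voltage_exists keep z y :
  gconnected pe qe keep -> exists f, is_voltage pe qe L keep z y f.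
Proof.
move=> Hc.
pose n := #|V|.
pose fx (x : 'rV[R]_n) := fun v => x 0 (enum_rank v).
pose M : 'M[R]_n := \matrix_(i, j) (if enum_val j == z then (i == enum_rank z)%:R
      else Kop keep (fun v => (enum_rank v == i)%:R) (enum_val j)).
have mulM : forall x j, (x *m M) 0 j =
    if enum_val j == z then fx x z else Kop keep (fx x) (enum_val j).
  move=> x j; rewrite mxE.
  under eq_bigr do rewrite mxE.
  case: ifP => _.
    rewrite (bigD1 (enum_rank z)) //= eqxx mulr1 big1 ?addr0 //.
    by move=> i /negbTE Hi; rewrite Hi mulr0.
  rewrite -Kop_sum; apply: Kop_ext => v.
  rewrite (bigD1 (enum_rank v)) //= eqxx mulr1 big1 ?addr0 //.
  by move=> i /negbTE Hi; rewrite eq_sym Hi mulr0.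
have inj : forall x : 'rV[R]_n, x *m M = 0 -> x = 0.
  move=> x Hx.
  have H1 : forall w, w != z -> Kop keep (fx x) w = 0.
    move=> w Hw; have := mulM x (enum_rank w); rewrite Hx mxE enum_rankK (negbTE Hw).
    by move=> <-.
  have Hz : fx x z = 0.
    by have := mulM x (enum_rank z); rewrite Hx mxE enum_rankK eqxx => <-.
  have H2 : forall w, Kop keep (fx x) w = 0.
    move=> w; have [->|Hwz] := eqVneq w z; last exact: H1.
    have := Kop_sum0 keep (fx x); rewrite (bigD1 z) //= big1 ?addr0 // => v; exact: H1.
  have H3 := harm0 keep (fx x) z Hc H2 Hz.
  apply/rowP => i; rewrite mxE.
  by have := H3 (enum_val i); rewrite /fx enum_valK.
have Mu : M \in unitmx.
  rewrite -row_free_unit -kermx_eq0; apply/eqP/row_matrixP => i.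
  rewrite row0; apply: inj; by rewrite -row_mul mulmx_ker row0.
pose b : 'rV[R]_n := \row_j (if enum_val j == z then 0
     else ((enum_val j == y)%:R - (enum_val j == z)%:R)).
pose x := b *m invmx M.
have xM : x *m M = b by rewrite /x mulmxKV.
have Hv : forall w, w != z -> Kop keep (fx x) w = (w == y)%:R - (w == z)%:R.
  move=> w Hw; have := mulM x (enum_rank w); rewrite xM mxE enum_rankK (negbTE Hw).
  by move=> <-.
exists (fx x); apply/is_voltageE; split.
  by have := mulM x (enum_rank z); rewrite xM mxE enum_rankK eqxx => <-.
move=> v; have [->|Hvz] := eqVneq v z; last by rewrite Hv // (negbTE Hvz).
have S1 := Kop_sum0 keep (fx x).
have S2 : \sum_w (((w == y)%:R - (w == z)%:R) : R) = 0.
  rewrite sumrB.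
  have D : forall u : V, \sum_w ((w == u)%:R : R) = 1.
    by move=> u; rewrite (bigD1 u) //= eqxx big1 ?addr0 // => w /negbTE ->.
  by rewrite !D subrr.
rewrite (bigD1 z) //= in S1; rewrite (bigD1 z) //= in S2.
have S3 : \sum_(w | w != z) Kop keep (fx x) w = \sum_(w | w != z) (((w == y)%:R - (w == z)%:R) : R).
  by apply: eq_bigr => w /Hv.
rewrite S3 in S1; rewrite eqxx in S2.
move: S1 S2; set s := \sum_(w | w != z) _; lra.
Qed.

Lemma jfun_spec keep z y :
  gconnected pe qe keep -> is_voltage pe qe L keep z y (fun x => jfun pe qe L keep z x y).
Proof.
move=> Hc; exact: epsilon_spec (voltage_exists keep z y Hc).
Qed.

Lemma jfun_eq keep z y f :
  gconnected pe qe keep -> is_voltage pe qe L keep z y f ->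
  forall x, jfun pe qe L keep z x y = f x.
Proof.
move=> Hc /is_voltageE [fz Hf] x.
have /is_voltageE [jz Hj] := jfun_spec keep z y Hc.
apply/eqP; rewrite -subr_eq0; apply/eqP.
pose h := fun v => jfun pe qe L keep z v y - f v.
apply: (harm0 keep h z Hc _ _) => [v|]; last by rewrite /h jz fz subrr.
rewrite (Kop_lin keep h (fun v => jfun pe qe L keep z v y) f 1 (-1) 0 v).
  by rewrite Hj Hf; ring.
by move=> u; rewrite /h; ring.
Qed.


Lemma split1 (Q : pred E) (F : E -> R) i :
  \sum_(e | predT e && Q e) F e = \sum_(e | del i e && Q e) F e + (Q i)%:R * F i.
Proof.
case Qi: (Q i).
  rewrite (bigD1 i) /= ?Qi // mul1r addrC; congr (_ + _).
  by apply: eq_bigl => e; rewrite /del andbC.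
rewrite mul0r addr0; apply: eq_bigl => e; rewrite /del /=.
by case: (eqVneq e i) => [->|]; rewrite ?Qi.
Qed.

Lemma Ksplit i f v :
  Kop predT f v = Kop (del i) f v
    + ((pe i == v)%:R * (f v - f (qe i)) + (qe i == v)%:R * (f v - f (pe i))) / L i.
Proof.
rewrite /Kop (split1 (fun e => pe e == v) (fun e => (f v - f (qe e)) / L e) i).
rewrite (split1 (fun e => qe e == v) (fun e => (f v - f (pe e)) / L e) i) /=.
have := Lneq0 i => Hi; rewrite /=; field => //.
Qed.

Section Conn.
Hypothesis Gconn : gconnected pe qe predT.

Notation j := (jfun pe qe L predT).
Notation r := (reff pe qe L).

Lemma r_xx x : r x x = 0.
Proof.
rewrite /reff; apply: (jfun_eq predT x x (fun _ => 0) Gconn); apply/is_voltageE.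
split => // v; rewrite subrr /Kop !big1 ?addr0 // => e _; by rewrite subrr mul0r.
Qed.

Lemma j_z z x : j z z x = 0.
Proof. by have /is_voltageE [-> _] := jfun_spec predT z x Gconn. Qed.

Lemma Sj z x y : j z x y = j z y x.
Proof.
have /is_voltageE [fz Hf] := jfun_spec predT z y Gconn.
have /is_voltageE [gz Hg] := jfun_spec predT z x Gconn.
have A := GI predT (fun v => j z v y) (fun v => j z v x).
have B := GI predT (fun v => j z v x) (fun v => j z v y).
rewrite (eq_bigr (fun v => j z v x * ((v == y)%:R - (v == z)%:R))) in A; last by move=> v _; rewrite Hf.
rewrite (eq_bigr (fun v => j z v y * ((v == x)%:R - (v == z)%:R))) in B; last by move=> v _; rewrite Hg.
rewrite !sum_delta2 in A B.
have C : \sum_(e | predT e) (j z (pe e) y - j z (qe e) y) * (j z (pe e) x - j z (qe e) x) / L e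
  = \sum_(e | predT e) (j z (pe e) x - j z (qe e) x) * (j z (pe e) y - j z (qe e) y) / L e.
  by apply: eq_bigr => e _; ring.
rewrite C -B in A; move: A; rewrite fz gz !subr0 => ->. by [].
Qed.

Lemma J x y z : r x y = r x z + r y z - 2 * j z x y.
Proof.
pose h := fun v => j z v x - j z v y - (j z y x - j z y y).
have /is_voltageE [fz Hf] := jfun_spec predT z x Gconn.
have /is_voltageE [gz Hg] := jfun_spec predT z y Gconn.
have Hh : is_voltage pe qe L predT y x h.
  apply/is_voltageE; split; first by rewrite /h; ring.
  move=> v; rewrite (Kop_lin predT h (fun v => j z v x) (fun v => j z v y) 1 (-1) (-(j z y x - j z y y)) v).
    by rewrite Hf Hg; ring.
  by move=> u; rewrite /h; ring.
have := jfun_eq predT y x h Gconn Hh x.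
rewrite /reff => ->; rewrite /h (Sj z y x); ring.
Qed.

Lemma r_sym x y : r x y = r y x.
Proof. by rewrite (J x y x) r_xx j_z; ring. Qed.


Lemma edge_facts i p :
  edge_val pe qe L (fun Ri Rai Rbi => L i * (Rai - Rbi) ^+ 2 / (L i + Ri) ^+ 2) i p
    = (r p (pe i) - r p (qe i)) ^+ 2 / L i /\
  edge_val pe qe L (fun Ri _ _ => L i / (L i + Ri)) i p = 1 - r (pe i) (qe i) / L i /\
  edge_val pe qe L (fun Ri _ _ => Ri / (L i + Ri)) i p = r (pe i) (qe i) / L i.
Proof.
have HJ := J p (pe i) (qe i).
have Li := Lneq0 i.
have Lp := L_pos i.
rewrite /edge_val; case: asboolP => Hnb.
- pose phi x := jfun pe qe L (del i) (qe i) x (pe i).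
  have /is_voltageE [phz0 Hph0] := jfun_spec (del i) (qe i) (pe i) Hnb.
  have phz : phi (qe i) = 0 by exact: phz0.
  have Hph : forall v, Kop (del i) phi v = (v == pe i)%:R - (v == qe i)%:R by exact: Hph0.
  have HRa : Ra pe qe L i p = phi (pe i) - phi p.
    apply: (jfun_eq (del i) (pe i) (qe i) (fun x => phi (pe i) - phi x) Hnb) .
    apply/is_voltageE; split; first by rewrite subrr.
    move=> v; rewrite (Kop_lin (del i) _ phi phi (-1) 0 (phi (pe i)) v).
      by rewrite Hph; ring.
    by move=> u; ring.
  have HR0 : 0 <= phi (pe i).
    have A := GI (del i) phi phi.
    rewrite (eq_bigr (fun v => phi v * ((v == pe i)%:R - (v == qe i)%:R))) in A;
      last by move=> v _; rewrite Hph.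
    rewrite sum_delta2 phz subr0 in A; rewrite A.
    apply: sumr_ge0 => e _; apply: divr_ge0; last exact: ltW.
    by rewrite -expr2 sqr_ge0.
  have LR : L i + phi (pe i) != 0 by rewrite gt_eqF // ltr_wpDr.
  pose c := L i / (L i + phi (pe i)).
  have Hpsi : forall x, j (qe i) x (pe i) = c * phi x.
    apply: (jfun_eq predT (qe i) (pe i) (fun x => c * phi x) Gconn).
    apply/is_voltageE; split; first by rewrite phz mulr0.
    move=> v; rewrite (Ksplit i) (Kop_lin (del i) _ phi phi c 0 0 v); last by move=> u; ring.
    rewrite Hph.
    rewrite /c; have [Ha|Ha] := eqVneq (pe i) v; have [Hb|Hb] := eqVneq (qe i) v; rewrite /=.
    - by rewrite -Ha in Hb *; rewrite Hb !subrr; ring.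
    - rewrite -Ha phz; move: LR; generalize (phi (pe i)) => R0 LR0; field; by rewrite Li LR0.
    - rewrite -Hb phz; move: LR; generalize (phi (pe i)) => R0 LR0; field; by rewrite Li LR0.
    - move: LR; generalize (phi (pe i)) => R0 LR0; field; by rewrite Li LR0.
  have Hrab : r (pe i) (qe i) = c * phi (pe i) by exact: Hpsi.
  rewrite /Rres /Rb HRa HJ Hrab Hpsi -/(phi (pe i)) -/(phi p) /c.
  split; [|split]; field; by rewrite Li LR.
- pose C x := connect (adj pe qe (del i)) (pe i) x.
  have HCb : ~~ C (qe i).
    apply/negP => Cb; apply: Hnb => x y.
    have sub : subrel (adj pe qe predT) (connect (adj pe qe (del i))).
      move=> u w /existsP [e /andP [_ He]].
    have [Ei|Nei] := eqVneq e i.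
      rewrite Ei in He; case/orP: He => /andP [/eqP <- /eqP <-] //.
      by rewrite (sym_connect_sym (adj_sym (del i))).
    by apply: connect1; apply/existsP; exists e; rewrite /del Nei He.
    exact: (@connect_sub _ _ _ sub x y (Gconn x y)).
  have HCa : C (pe i) by exact: connect0.
  have HCedge : forall e, e != i -> C (pe e) = C (qe e).
    move=> e ne.
    have Ad : adj pe qe (del i) (pe e) (qe e).
      by apply/existsP; exists e; rewrite /del ne !eqxx.
    apply/idP/idP => H.
      exact: connect_trans H (connect1 Ad).
    by apply: connect_trans H (connect1 _); rewrite adj_sym.
  pose psi x := if C x then L i else 0.
  have Hpsi : forall x, j (qe i) x (pe i) = psi x.
    apply: (jfun_eq predT (qe i) (pe i) psi Gconn).
    apply/is_voltageE; split; first by rewrite /psi (negbTE HCb).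
    move=> v; rewrite (Ksplit i).
    have -> : Kop (del i) psi v = 0.
      rewrite /Kop !big1 ?addr0 //.
        by move=> e /andP [ne /eqP <-]; rewrite /psi (HCedge e ne) subrr mul0r.
      by move=> e /andP [ne /eqP <-]; rewrite /psi (HCedge e ne) subrr mul0r.
    rewrite add0r.
    have [Ha|Ha] := eqVneq (pe i) v; have [Hb|Hb] := eqVneq (qe i) v.
    + by move: HCb; rewrite Hb -Ha HCa.
    + rewrite -Ha /psi HCa (negbTE HCb) /=; field; by rewrite Li.
    + rewrite -Hb /psi HCa (negbTE HCb) /=; field; by rewrite Li.
    + rewrite /=; field; by rewrite Li.
  have Hrab : r (pe i) (qe i) = L i by rewrite /reff Hpsi /psi HCa.
  have [l1 [l2 [l3 l4]]] := @lim3 R (L i) Lp.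
  rewrite HJ Hrab Hpsi /psi -/(C p).
  case: (C p).
  + split; [|split].
    * transitivity (L i); first exact: l2.
      field; by rewrite Li.
    * transitivity (0 : R); first exact: l3.
      field; by rewrite Li.
    * transitivity (1 : R); first exact: l4.
      field; by rewrite Li.
  + split; [|split].
    * transitivity (L i); first exact: l1.
      field; by rewrite Li.
    * transitivity (0 : R); first exact: l3.
      field; by rewrite Li.
    * transitivity (1 : R); first exact: l4.
      field; by rewrite Li.
Qed.

Lemma val_sum (g : V -> R) :
  \sum_q ((valence pe qe q)%:R * g q) = \sum_e (g (pe e) + g (qe e)).
Proof.
under eq_bigr do rewrite /valence natrD mulrDl.
rewrite big_split /= [RHS]big_split /=.
have H : forall phi : E -> V, \sum_q ((#|[set e | phi e == q]|)%:R * g q) = \sum_e g (phi e).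
  move=> phi; rewrite -(sum_exch phi predT (fun _ v => g v)).
  apply: eq_bigr => q _; rewrite mulr_natl -sumr_const.
  by apply: eq_bigl => e; rewrite unfold_in /in_set asboolb.
by rewrite !H.
Qed.

Lemma key p :
  \sum_q r q p = \sum_e (r (pe e) p * (r (pe e) p - j p (pe e) (qe e))
                      + r (qe e) p * (r (qe e) p - j p (pe e) (qe e))) / L e.
Proof.
have := sum_Kop_dep predT (fun v => r v p) (fun x v => j p x v).
have HK : forall v, Kop predT (fun x => j p x v) v = 1 - (v == p)%:R.
  by move=> v; have /is_voltageE [_ H] := jfun_spec predT p v Gconn; rewrite H eqxx.
under eq_bigr do rewrite HK mulrBr mulr1.
rewrite sumrB sum_delta r_xx subr0 => ->.
by apply: eq_bigr => e _; rewrite (Sj p (qe e) (pe e)).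
Qed.

Lemma main_eq p :
  let lhs := \sum_(i : E) edge_val pe qe L
                (fun Ri Rai Rbi => L i * (Rai - Rbi) ^+ 2 / (L i + Ri) ^+ 2) i p in
  let mid := \sum_(i : E) edge_val pe qe L (fun Ri _ _ => L i / (L i + Ri)) i p
                * (r (pe i) p + r (qe i) p)
             - \sum_(q : V) ((valence pe qe q)%:R - 2) * r p q in
  let rhs := 2 * \sum_(q : V) r p q
             - \sum_(i : E) edge_val pe qe L (fun Ri _ _ => Ri / (L i + Ri)) i p
                * (r (pe i) p + r (qe i) p) in
  lhs = mid /\ mid = rhs.
Proof.
move=> lhs mid rhs; rewrite /lhs /mid /rhs.
have H1 : \sum_(i : E) edge_val pe qe L
                (fun Ri Rai Rbi => L i * (Rai - Rbi) ^+ 2 / (L i + Ri) ^+ 2) i p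
   = \sum_i (r p (pe i) - r p (qe i)) ^+ 2 / L i.
  by apply: eq_bigr => i _; case: (edge_facts i p).
have H2 : \sum_(i : E) edge_val pe qe L (fun Ri _ _ => L i / (L i + Ri)) i p
                * (r (pe i) p + r (qe i) p)
   = \sum_i (1 - r (pe i) (qe i) / L i) * (r (pe i) p + r (qe i) p).
  by apply: eq_bigr => i _; case: (edge_facts i p) => _ [-> _].
have H3 : \sum_(i : E) edge_val pe qe L (fun Ri _ _ => Ri / (L i + Ri)) i p
                * (r (pe i) p + r (qe i) p)
   = \sum_i (r (pe i) (qe i) / L i) * (r (pe i) p + r (qe i) p).
  by apply: eq_bigr => i _; case: (edge_facts i p) => _ [_ ->].
rewrite H1 H2 H3.
have Hval : \sum_q ((valence pe qe q)%:R - 2) * r p q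
    = \sum_e (r (pe e) p + r (qe e) p) - 2 * \sum_q r q p.
  under eq_bigr do rewrite mulrBl (r_sym p _).
  by rewrite sumrB (val_sum (fun q => r q p)) -mulr_sumr.
have Hs : \sum_q r p q = \sum_q r q p by apply: eq_bigr => q _; rewrite r_sym.
rewrite Hval Hs.
have HB : \sum_e (1 - r (pe e) (qe e) / L e) * (r (pe e) p + r (qe e) p)
   = \sum_e (r (pe e) p + r (qe e) p) - \sum_e (r (pe e) (qe e) / L e) * (r (pe e) p + r (qe e) p).
  by rewrite -sumrB; apply: eq_bigr => e _; ring.
split; last by rewrite HB; ring.
rewrite key mulr_sumr -sumrB -sumrB; apply: eq_bigr => e _.
rewrite (J (pe e) (qe e) p) (r_sym p (pe e)) (r_sym p (qe e)).
have := Lneq0 e => Le; field; by rewrite Le.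
Qed.

End Conn.

End Graph.

Theorem lemma3p3 (R : realType) (V E : finType) (pe qe : E -> V) (L : E -> R)
  (L_pos : forall e, 0 < L e)
  (Gconn : gconnected pe qe predT)
  (p : V) :
  let r := reff pe qe L in
  let lhs := \sum_(i : E) edge_val pe qe L
                (fun Ri Rai Rbi => L i * (Rai - Rbi) ^+ 2 / (L i + Ri) ^+ 2) i p in
  let mid := \sum_(i : E) edge_val pe qe L (fun Ri _ _ => L i / (L i + Ri)) i p
                * (r (pe i) p + r (qe i) p)
             - \sum_(q : V) ((valence pe qe q)%:R - 2) * r p q in
  let rhs := 2 * \sum_(q : V) r p q
             - \sum_(i : E) edge_val pe qe L (fun Ri _ _ => Ri / (L i + Ri)) i p
                * (r (pe i) p + r (qe i) p) in
  lhs = mid /\ mid = rhs.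
Proof.
exact: (@main_eq R V E pe qe L L_pos Gconn p).
Qed.
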